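(* Let $\Omega\subset B(\mathcal H)^d$ be an NC domain with exhausting sequence $\{\Omega_k\}$, and let $f:\Omega\to B(\mathcal H)^r$ be an NC function. Then: (a) for each $k$, $f(\Omega_k)$ is norm-bounded; (b) if $x_1,x_2,\dots$ is a sequence in $\Omega$ of length $l\in\mathbb N\cup\{\infty\}$ and $s:\mathcal H\to\mathcal H^{(l)}$ is a bounded invertible linear map with $s^{-1}\big(\bigoplus_n x_n\big)s\in\Omega$, then $\sup_n\|f(x_n)\|<\infty$ and $$f\Big(s^{-1}\Big(\bigoplus_n x_n\Big)s\Big)=s^{-1}\Big(\bigoplus_n f(x_n)\Big)s.$$
   Context: Throughout, $\mathcal H$ is an infinite-dimensional separable complex Hilbert space, $B(\mathcal H)$ the bounded operators with the operator norm, and $\mathcal H^{(l)}$ ($l\in\mathbb N\cup\{\infty\}$) the direct sum of $l$ copies of $\mathcal H$. $B(\mathcal H)^d$ has the norm $\|x\|=\max_i\|x^i\|$. Operations on tuples are componentwise: for bounded invertible linear $s:\mathcal H\to\mathcal H^{(l)}$ and $z\in B(\mathcal H^{(l)})^d$, $s^{-1}zs=(s^{-1}z^1s,\dots,s^{-1}z^ds)$; for a finite or countable sequence $x_1,x_2,\dots$ in $B(\mathcal H)^d$ of length $l$ (uniformly bounded when $l=\infty$), $\bigoplus_n x_n\in B(\mathcal H^{(l)})^d$ has $i$-th entry $\bigoplus_n x_n^i$; block matrices of tuples are defined entrywise per coordinate. A set is unitarily invariant if $u^*xu$ lies in it for each of its elements $x$ and each unitary $u\in B(\mathcal H)$. NC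 domain: $\Omega\subset B(\mathcal H)^d$ is an NC domain if there are subsets $\Omega_1,\Omega_2,\dots$ of $\Omega$ (an exhausting sequence) with (1) $\Omega_k\subset\mathrm{int}\,\Omega_{k+1}$ (norm interior) and $\Omega=\bigcup_k\Omega_k$; (2) each $\Omega_k$ norm-bounded and unitarily invariant; (3) for every sequence $x_1,x_2,\dots$ in $\Omega_k$ of length $l\in\mathbb N\cup\{\infty\}$ there is a unitary $u:\mathcal H\to\mathcal H^{(l)}$ with $u^{-1}(\bigoplus_n x_n)u\in\Omega_k$. NC function: $f:\Omega\to B(\mathcal H)^r$ on an NC domain is NC if whenever $x,y\in\Omega$ and $s:\mathcal H\to\mathcal H^{(2)}$ is bounded, linear, invertible with $s^{-1}\begin{bmatrix}x&0\\0&y\end{bmatrix}s\in\Omega$, then $f\Big(s^{-1}\begin{bmatrix}x&0\\0&y\end{bmatrix}s\Big)=s^{-1}\begin{bmatrix}f(x)&0\\0&f(y)\end{bmatrix}s$. *)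

(* Defs.v *)
(* H := l^2(N) over C = R[i] (R = Stdlib reals, a realType);
   H^(l) := l^2(idx l * N), idx l = {0,..,l-1} (l finite) or N (l = oo). *)
From mathcomp Require Import all_boot all_order all_algebra.
Import Order.TTheory GRing.Theory Num.Theory.
From mathcomp Require Import complex.
From mathcomp Require Import all_classical all_reals all_analysis Rstruct.
Set Implicit Arguments. Unset Strict Implicit. Unset Printing Implicit Defensive.
Local Open Scope classical_set_scope.
Local Open Scope ring_scope.

Definition RR : realType := Rdefinitions.R.
Definition CC : fieldType := RR[i].

Definition cn2 (z : CC) : RR := (Re z) ^+ 2 + (Im z) ^+ 2.

Definition sqsum (I : choiceType) (v : I -> CC) : \bar RR :=
  \esum_(i in [set: I]) (cn2 (v i))%:E.

Definition sqsummable (I : choiceType) (v : I -> CC) : Prop := (sqsum v < +oo)%E.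

Definition l2 (I : choiceType) := {v : I -> CC | sqsummable v}.

Lemma sqsummable0 (I : choiceType) : sqsummable (fun _ : I => 0 : CC).
Proof.
rewrite /sqsummable /sqsum esum1 ?ltry// => i _.
by rewrite /cn2 /= expr0n /= addr0.
Qed.

Definition l2zero (I : choiceType) : l2 I := exist _ _ (@sqsummable0 I).

(* the element of l^2(I) given by v when v is square-summable (0 otherwise;
   only used on square-summable v) *)
Definition mkl2 (I : choiceType) (v : I -> CC) : l2 I :=
  match pselect (sqsummable v) with
  | left p => exist _ v p
  | right _ => l2zero I
  end.

Definition vnorm (I : choiceType) (v : I -> CC) : RR := Num.sqrt (fine (sqsum v)).
Definition nrm (I : choiceType) (v : l2 I) : RR := vnorm (proj1_sig v).

Definition Op (I J : choiceType) := l2 I -> l2 J.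

Definition is_linear_op (I J : choiceType) (T : Op I J) : Prop :=
  forall (a : CC) (u v w : l2 I),
    (forall i, proj1_sig w i = a * proj1_sig u i + proj1_sig v i) ->
    forall j, proj1_sig (T w) j = a * proj1_sig (T u) j + proj1_sig (T v) j.

Definition is_bounded_op (I J : choiceType) (T : Op I J) : Prop :=
  exists M : RR, forall v, nrm (T v) <= M * nrm v.

Definition bop (I J : choiceType) (T : Op I J) : Prop :=
  is_linear_op T /\ is_bounded_op T.

Definition opnorm (I J : choiceType) (T : Op I J) : RR :=
  sup [set nrm (T v) | v in [set v : l2 I | nrm v <= 1]].

Definition opdist (I J : choiceType) (T T' : Op I J) : RR :=
  sup [set vnorm (fun j => proj1_sig (T v) j - proj1_sig (T' v) j)
      | v in [set v : l2 I | nrm v <= 1]].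

Definition BH := Op nat nat.
Definition BHt (d : nat) := 'I_d -> BH.

Definition bopt (d : nat) (x : BHt d) : Prop := forall i, bop (x i).

Definition tnorm (d : nat) (x : BHt d) : RR := \big[Num.max/0]_(i < d) opnorm (x i).
Definition tdist (d : nat) (x y : BHt d) : RR :=
  \big[Num.max/0]_(i < d) opdist (x i) (y i).

Definition norm_bounded (d : nat) (S : set (BHt d)) : Prop :=
  exists M : RR, forall x, S x -> tnorm x <= M.

Definition in_norm_interior (d : nat) (S : set (BHt d)) (x : BHt d) : Prop :=
  exists2 e : RR, 0 < e & forall y, bopt y -> tdist y x < e -> S y.

Definition unitary (I J : choiceType) (u : Op I J) : Prop :=
  is_linear_op u /\ (forall v, nrm (u v) = nrm v) /\ bijective u.

Definition binvertible (I J : choiceType) (s : Op I J) (t : Op J I) : Prop :=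
  bop s /\ bop t /\ cancel s t /\ cancel t s.

Definition conjt (J : choiceType) (d : nat) (t : Op J nat)
    (z : 'I_d -> Op J J) (s : Op nat J) : BHt d :=
  fun i => t \o z i \o s.

Definition unitarily_invariant (d : nat) (S : set (BHt d)) : Prop :=
  forall x (u u' : BH), S x -> unitary u -> cancel u u' -> cancel u' u ->
    S (conjt u' (fun i => x i) u).

(* lengths l in N u {oo}: Some m = m, None = oo *)
Definition len := option nat.
Definition inL (l : len) (n : nat) : bool := if l is Some m then (n < m)%N else true.
Definition valid_len (l : len) : Prop := if l is Some m then (0 < m)%N else True.
Definition idx (l : len) := {n : nat | inL l n}.
Definition Hidx (l : len) : choiceType := (idx l * nat)%type.

Definition comp_of (l : len) (w : l2 (Hidx l)) (n : idx l) : l2 nat :=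
  mkl2 (fun m => proj1_sig w (n, m)).

Definition dsum (l : len) (x : nat -> BH) : Op (Hidx l) (Hidx l) :=
  fun w => mkl2 (fun p : Hidx l => proj1_sig (x (proj1_sig p.1) (comp_of w p.1)) p.2).

Arguments dsum : clear implicits.

Definition dsumt (d : nat) (l : len) (x : nat -> BHt d) : 'I_d -> Op (Hidx l) (Hidx l) :=
  fun i => dsum l (fun n => x n i).

Arguments dsumt {d} l x i.

Definition unif_bounded (d : nat) (l : len) (x : nat -> BHt d) : Prop :=
  exists M : RR, forall n, inL l n -> tnorm (x n) <= M.

Definition dsum_closed (d : nat) (S : set (BHt d)) : Prop :=
  forall (l : len) (x : nat -> BHt d), valid_len l ->
    (forall n, inL l n -> S (x n)) ->
    exists (u : Op nat (Hidx l)) (u' : Op (Hidx l) nat),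
      [/\ unitary u, cancel u u', cancel u' u & S (conjt u' (dsumt l x) u)].

Definition nc_domain (d : nat) (Om : set (BHt d)) (Omk : nat -> set (BHt d)) : Prop :=
  [/\ (forall x, Om x -> bopt x),
      (forall k, Omk k `<=` Om),
      (forall k x, Omk k x -> in_norm_interior (Omk k.+1) x),
      (forall x, Om x -> exists k, Omk k x) &
      [/\ (forall k, norm_bounded (Omk k)),
          (forall k, unitarily_invariant (Omk k)) &
          (forall k, dsum_closed (Omk k))]].

(* the 2x2 block diagonal [x 0; 0 y] is the direct sum of length 2 *)
Definition pair_seq (d : nat) (x y : BHt d) : nat -> BHt d :=
  fun n => if n == 0%N then x else y.

Definition nc_function (d r : nat) (Om : set (BHt d)) (f : BHt d -> BHt r) : Prop :=
  (forall x, Om x -> bopt (f x)) /\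
  (forall (x y : BHt d) (s : Op nat (Hidx (Some 2%N))) (t : Op (Hidx (Some 2%N)) nat),
    Om x -> Om y -> binvertible s t ->
    Om (conjt t (dsumt (Some 2%N) (pair_seq x y)) s) ->
    f (conjt t (dsumt (Some 2%N) (pair_seq x y)) s) =
      conjt t (dsumt (Some 2%N) (pair_seq (f x) (f y))) s).

(* Main.v *)
Require Import Defs.
From mathcomp Require Import all_boot all_order all_algebra.
Import Order.TTheory GRing.Theory Num.Theory.
From mathcomp Require Import complex.
From mathcomp Require Import all_classical all_reals all_analysis Rstruct.
From mathcomp Require Import ring lra.
Local Open Scope classical_set_scope.
Local Open Scope ring_scope.
Set Implicit Arguments. Unset Strict Implicit. Unset Printing Implicit Defensive.
Lemma cn2_ge0 (a : CC) : 0 <= cn2 a.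
Proof. rewrite /cn2; apply: addr_ge0; exact: sqr_ge0. Qed.
Lemma cn2M (a b : CC) : cn2 (a * b) = cn2 a * cn2 b.
Proof. case: a => a1 a2; case: b => b1 b2; rewrite /cn2 /=. ring. Qed.
Lemma cn2D (a b : CC) : cn2 (a + b) <= 2 * (cn2 a + cn2 b).
Proof. case: a => a1 a2; case: b => b1 b2; rewrite /cn2 /=.
have h1 := sqr_ge0 (a1 - b1); have h2 := sqr_ge0 (a2 - b2).
rewrite -subr_ge0; apply: le_trans (addr_ge0 h1 h2) _.
rewrite le_eqVlt; apply/orP; left; apply/eqP; ring. Qed.
Lemma cn2_0 : cn2 0 = 0.
Proof. by rewrite /cn2 /= expr0n /= addr0. Qed.
Lemma cn2_eq0 (a : CC) : cn2 a = 0 -> a = 0.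
Proof. case: a => a1 a2; rewrite /cn2 /= => /eqP.
rewrite paddr_eq0 ?sqr_ge0 // !sqrf_eq0 => /andP[/eqP -> /eqP ->] //. Qed.

Lemma sqsum_ge0 (I : choiceType) (v : I -> CC) : (0 <= sqsum v)%E.
Proof. apply: esum_ge0 => i _; rewrite lee_fin; exact: cn2_ge0. Qed.

Lemma sqsum_le (I : choiceType) (u v : I -> CC) :
  (forall i, cn2 (u i) <= cn2 (v i)) -> (sqsum u <= sqsum v)%E.
Proof. move=> h; apply: le_esum => i _; rewrite lee_fin; exact: h. Qed.

Lemma esumZ (I : choiceType) (a : I -> \bar RR) (c : RR) : 0 <= c ->
  (forall i, (0 <= a i)%E) ->
  \esum_(i in [set: I]) (c%:E * a i)%E = (c%:E * \esum_(i in [set: I]) a i)%E.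
Proof.
move=> c0 a0; rewrite /esum -ereal_supZl //; last first.
  by apply/set0P; exists 0%E; exists set0; [exact: fsets_set0|rewrite fsbig_set0].
congr ereal_sup; apply/seteqP; split => z /=.
  move=> [A hA <-]; exists (\sum_(i \in A) a i)%E; first by exists A.
  by rewrite ge0_mule_fsumr.
move=> [y [A hA <-] <-]; exists A => //; by rewrite ge0_mule_fsumr.
Qed.

Lemma esum_single (I : choiceType) (a : I -> \bar RR) (i0 : I) :
  (forall i, (0 <= a i)%E) -> (forall i, i != i0 -> a i = 0%E) ->
  \esum_(i in [set: I]) a i = a i0.
Proof.
move=> a0 az; rewrite (esumID [set i0]) //; rewrite setTI esum_set1 //.
rewrite esum1 ?adde0 // => i [_ /= h]; apply: az; apply/eqP => e; exact: h e.
Qed.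

Lemma esum_ge_single (I : choiceType) (a : I -> \bar RR) (i0 : I) :
  (forall i, (0 <= a i)%E) -> (a i0 <= \esum_(i in [set: I]) a i)%E.
Proof.
move=> a0; rewrite (esumID [set i0]) //; rewrite setTI esum_set1 //.
by rewrite leeDl // esum_ge0.
Qed.
Definition ss (I : choiceType) (v : I -> CC) : RR := fine (sqsum v).
Definition n2 (I : choiceType) (v : l2 I) : RR := ss (proj1_sig v).

Lemma sqsummableE (I : choiceType) (v : I -> CC) :
  sqsummable v -> sqsum v = (ss v)%:E.
Proof. by move=> h; rewrite /ss fineK // ge0_fin_numE // sqsum_ge0. Qed.

Lemma ss_ge0 (I : choiceType) (v : I -> CC) : 0 <= ss v.
Proof. by apply: fine_ge0; apply: sqsum_ge0. Qed.

Lemma n2_ge0 (I : choiceType) (v : l2 I) : 0 <= n2 v.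
Proof. exact: ss_ge0. Qed.

Lemma l2E (I : choiceType) (v : l2 I) : sqsum (proj1_sig v) = (n2 v)%:E.
Proof. by apply: sqsummableE; exact: proj2_sig v. Qed.

Lemma sqsummable_leE (I : choiceType) (u : I -> CC) (c : RR) :
  (sqsum u <= c%:E)%E -> sqsummable u /\ ss u <= c.
Proof.
move=> h; have su : sqsummable u by rewrite /sqsummable (le_lt_trans h) ?ltry.
split => //; by rewrite -lee_fin -sqsummableE.
Qed.

Lemma nrm_n2 (I : choiceType) (v : l2 I) : nrm v = Num.sqrt (n2 v).
Proof. by []. Qed.

Lemma l2_ext (I : choiceType) (u v : l2 I) : proj1_sig u = proj1_sig v -> u = v.
Proof.
case: u => u pu; case: v => v pv /= e; subst; congr exist; exact: Prop_irrelevance.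
Qed.

Lemma l2_extP (I : choiceType) (u v : l2 I) :
  (forall i, proj1_sig u i = proj1_sig v i) -> u = v.
Proof. by move=> h; apply: l2_ext; apply: funext. Qed.

Lemma mkl2_val (I : choiceType) (v : I -> CC) : sqsummable v -> proj1_sig (mkl2 v) = v.
Proof. by move=> h; rewrite /mkl2; case: pselect. Qed.

Lemma mkl2K (I : choiceType) (v : l2 I) : mkl2 (proj1_sig v) = v.
Proof. by apply: l2_ext; rewrite mkl2_val //; exact: proj2_sig v. Qed.

Lemma sqsum0 (I : choiceType) : sqsum (fun _ : I => 0 : CC) = 0%E.
Proof. by rewrite /sqsum esum1 // => i _; rewrite cn2_0. Qed.

Lemma n2_l2zero (I : choiceType) : n2 (l2zero I) = 0.
Proof. by rewrite /n2 /ss /= sqsum0. Qed.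

Lemma n2_eq0 (I : choiceType) (v : l2 I) : n2 v = 0 -> v = l2zero I.
Proof.
move=> h; apply: l2_extP => i /=; apply: cn2_eq0; apply/eqP; rewrite eq_le cn2_ge0 andbT.
have := @esum_ge_single _ (fun j => (cn2 (proj1_sig v j))%:E) i.
rewrite -/(sqsum _) l2E h lee_fin; apply.
by move=> j; rewrite lee_fin cn2_ge0.
Qed.

Lemma sqsum_lin (I : choiceType) (a : CC) (u v : I -> CC) :
  (sqsum (fun i => (a * u i + v i)%R) <=
     (2 * cn2 a)%:E * sqsum u + (2:RR)%:E * sqsum v)%E.
Proof.
rewrite /sqsum -!esumZ ?mulr_ge0 ?cn2_ge0 //; last 2 first.
- by move=> i; rewrite lee_fin cn2_ge0.
- by move=> i; rewrite lee_fin cn2_ge0.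
rewrite -esumD; last 2 first.
- by move=> i _; rewrite -EFinM lee_fin mulr_ge0 ?mulr_ge0 ?cn2_ge0.
- by move=> i _; rewrite -EFinM lee_fin mulr_ge0 ?cn2_ge0.
apply: le_esum => i _; rewrite -!EFinM -EFinD lee_fin.
apply: (le_trans (cn2D _ _)); rewrite cn2M.
rewrite le_eqVlt; apply/orP; left; apply/eqP; ring.
Qed.

Lemma sqsummable_lin (I : choiceType) (a : CC) (u v : I -> CC) :
  sqsummable u -> sqsummable v -> sqsummable (fun i => a * u i + v i).
Proof.
move=> hu hv; have := sqsum_lin a u v; rewrite (sqsummableE hu) (sqsummableE hv).
by rewrite -!EFinM -EFinD => /sqsummable_leE [].
Qed.

Lemma sqsummable_le (I : choiceType) (u v : I -> CC) :
  (forall i, cn2 (u i) <= cn2 (v i)) -> sqsummable v -> sqsummable u.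
Proof. by move=> h hv; rewrite /sqsummable (le_lt_trans (sqsum_le h)). Qed.

Definition vlin (I : choiceType) (a : CC) (u v : l2 I) : l2 I :=
  mkl2 (fun i => a * proj1_sig u i + proj1_sig v i).

Lemma vlinE (I : choiceType) (a : CC) (u v : l2 I) i :
  proj1_sig (vlin a u v) i = a * proj1_sig u i + proj1_sig v i.
Proof. by rewrite /vlin mkl2_val //; apply: sqsummable_lin; apply: proj2_sig. Qed.

Lemma lin_opE (I J : choiceType) (T : Op I J) a u v :
  is_linear_op T -> T (vlin a u v) = vlin a (T u) (T v).
Proof. move=> hT; apply: l2_extP => j; rewrite vlinE; apply: hT => i; exact: vlinE. Qed.

Lemma lin_op0 (I J : choiceType) (T : Op I J) :
  is_linear_op T -> T (l2zero I) = l2zero J.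
Proof.
move=> hT; apply: l2_extP => j /=.
have e : forall i, proj1_sig (l2zero I) i =
   1 * proj1_sig (l2zero I) i + proj1_sig (l2zero I) i by move=> i /=; rewrite mul1r addr0.
have := hT 1 _ _ _ e j; rewrite mul1r => h.
by apply: (addrI (proj1_sig (T (l2zero I)) j)); rewrite addr0 -h.
Qed.

Definition BND (I J : choiceType) (T : Op I J) (C : RR) := forall v, n2 (T v) <= C * n2 v.

Lemma sqr_le (a b : RR) : 0 <= a -> a <= b -> a ^+ 2 <= b ^+ 2.
Proof. move=> a0 ab; rewrite !expr2; apply: ler_pM => //. Qed.

Lemma nrm_ge0 (I : choiceType) (v : l2 I) : 0 <= nrm v.
Proof. exact: sqrtr_ge0. Qed.

Lemma nrm_sqr (I : choiceType) (v : l2 I) : nrm v ^+ 2 = n2 v.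
Proof. by rewrite /nrm sqr_sqrtr // n2_ge0. Qed.

Lemma bounded_BND (I J : choiceType) (T : Op I J) :
  is_bounded_op T -> exists2 C, 0 <= C & BND T C.
Proof.
move=> [M hM]; exists (M ^+ 2); first exact: sqr_ge0.
move=> v; rewrite -!nrm_sqr -exprMn; apply: sqr_le; first exact: nrm_ge0.
exact: hM.
Qed.

Lemma BND_bounded (I J : choiceType) (T : Op I J) C :
  0 <= C -> BND T C -> is_bounded_op T.
Proof.
move=> C0 hT; exists (Num.sqrt C) => v; rewrite !nrm_n2 -sqrtrM //.
apply: ler_wsqrtr; exact: hT.
Qed.

Lemma bop_BND (I J : choiceType) (T : Op I J) :
  bop T -> exists2 C, 0 <= C & BND T C.
Proof. by move=> [_ /bounded_BND]. Qed.

Lemma BND_comp (I J K : choiceType) (T : Op I J) (U : Op J K) C D :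
  0 <= D -> BND T C -> BND U D -> BND (U \o T) (D * C).
Proof.
move=> D0 hT hU v /=; apply: (le_trans (hU _)); rewrite -mulrA; exact: ler_wpM2l.
Qed.

Lemma lin_comp (I J K : choiceType) (T : Op I J) (U : Op J K) :
  is_linear_op T -> is_linear_op U -> is_linear_op (U \o T).
Proof.
move=> hT hU a u v w hw j /=; apply: hU => k; apply: hT; exact: hw.
Qed.

Lemma bop_comp (I J K : choiceType) (T : Op I J) (U : Op J K) :
  bop T -> bop U -> bop (U \o T).
Proof.
move=> hT hU; split; first by apply: lin_comp; [case: hT|case: hU].
have [C C0 hC] := bop_BND hT; have [D D0 hD] := bop_BND hU.
apply: (@BND_bounded _ _ _ (D * C)); first exact: mulr_ge0.
exact: BND_comp.
Qed.

Lemma binv_comp (I J K : choiceType) (s : Op I J) (t : Op J I) (s2 : Op J K) (t2 : Op K J) :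
  binvertible s t -> binvertible s2 t2 -> binvertible (s2 \o s) (t \o t2).
Proof.
move=> [bs [bt [st ts]]] [bs2 [bt2 [st2 ts2]]]; split; first exact: bop_comp.
split; first exact: bop_comp.
split => v /=; [by rewrite st2 st | by rewrite ts ts2].
Qed.

Definition rC (c : RR) : CC := Complex c 0.
Lemma cn2_rC c : cn2 (rC c) = c ^+ 2.
Proof. by rewrite /cn2 /= expr0n /= addr0. Qed.

Lemma sqsum_scal (I : choiceType) (a : CC) (u : I -> CC) :
  sqsum (fun i => (a * u i + 0)%R) = ((cn2 a)%:E * sqsum u)%E.
Proof.
rewrite /sqsum -esumZ ?cn2_ge0 //; last by move=> i; rewrite lee_fin cn2_ge0.
by apply: eq_esum => i _; rewrite addr0 cn2M EFinM.
Qed.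

Lemma n2_scal (I : choiceType) (a : CC) (u : l2 I) :
  n2 (vlin a u (l2zero I)) = cn2 a * n2 u.
Proof.
rewrite {1}/n2 /ss.
have -> : proj1_sig (vlin a u (l2zero I)) = (fun i => (a * proj1_sig u i + 0)%R).
  by apply: funext => i; rewrite vlinE.
by rewrite sqsum_scal l2E -EFinM.
Qed.

Lemma opnorm_le (I J : choiceType) (T : Op I J) C :
  0 <= C -> (forall v, nrm v <= 1 -> nrm (T v) <= C) -> opnorm T <= C.
Proof.
move=> C0 h; apply: ge_sup.
  exists (nrm (T (l2zero I))); exists (l2zero I) => //.
  by rewrite /= nrm_n2 n2_l2zero sqrtr0.
by move=> z [v hv <-]; apply: h.
Qed.

Lemma opnorm_bound (I J : choiceType) (T : Op I J) (v : l2 I) :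
  bop T -> nrm (T v) <= opnorm T * nrm v.
Proof.
move=> hT; have [C C0 hC] := bop_BND hT.
have hs : has_sup [set nrm (T v) | v in [set v : l2 I | nrm v <= 1]].
  split.
    exists (nrm (T (l2zero I))); exists (l2zero I) => //.
    by rewrite /= nrm_n2 n2_l2zero sqrtr0.
  exists (Num.sqrt C) => z [w hw <-]; rewrite nrm_n2; apply: ler_wsqrtr.
  apply: (le_trans (hC w)); rewrite -[leRHS]mulr1; apply: ler_wpM2l => //.
  by rewrite -nrm_sqr; rewrite -(expr1n _ 2%N); apply: sqr_le => //; exact: nrm_ge0.
have [e0|ne0] := eqVneq (n2 v) 0.
  have -> := n2_eq0 e0; rewrite lin_op0; last by case: hT.
  by rewrite !nrm_n2 !n2_l2zero sqrtr0 mulr0.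
have np : 0 < nrm v by rewrite nrm_n2 sqrtr_gt0 lt_def ne0 n2_ge0.
set c := (nrm v)^-1.
have c0 : 0 <= c by rewrite invr_ge0 ltW.
have nw : nrm (vlin (rC c) v (l2zero I)) = 1.
  rewrite nrm_n2 n2_scal cn2_rC sqrtrM ?sqr_ge0 // sqrtr_sqr ger0_norm //.
  by rewrite -nrm_n2 mulVf // gt_eqF.
have hin : [set nrm (T v) | v in [set v : l2 I | nrm v <= 1]]
    (nrm (T (vlin (rC c) v (l2zero I)))).
  by exists (vlin (rC c) v (l2zero I)) => //=; rewrite nw.
have := sup_upper_bound hs hin.
rewrite -/(opnorm T) lin_opE; last by case: hT.
rewrite lin_op0; last by case: hT.
rewrite nrm_n2 n2_scal cn2_rC sqrtrM ?sqr_ge0 // sqrtr_sqr ger0_norm // -nrm_n2.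
rewrite /c => h; rewrite -(ler_pdivrMr _ _ np); by rewrite mulrC.
Qed.

Lemma tnorm_le (d : nat) (x : BHt d) C :
  0 <= C -> (forall i, opnorm (x i) <= C) -> tnorm x <= C.
Proof. by move=> C0 h; apply: bigmax_le. Qed.

Lemma opnorm_le_tnorm (d : nat) (x : BHt d) i : opnorm (x i) <= tnorm x.
Proof. exact: (le_bigmax _ (fun i => opnorm (x i))). Qed.

Lemma tnorm_ge0 (d : nat) (x : BHt d) : 0 <= tnorm x.
Proof.
rewrite /tnorm; elim/big_rec: _ => // i y _ hy; by rewrite le_max hy orbT.
Qed.
Lemma fubini (l : len) (a : Hidx l -> \bar RR) : (forall p, (0 <= a p)%E) ->
  \esum_(p in [set: Hidx l]) a p =
  \esum_(n in [set: idx l]) \esum_(m in [set: nat]) a (n, m).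
Proof.
move=> a0; rewrite esum_esum //.
have -> : [set: idx l] `*`` (fun _ => [set: nat]) = [set: Hidx l].
  by apply/seteqP; split => // p.
by apply: eq_esum => -[n m].
Qed.

Lemma comp_ofE (l : len) (w : l2 (Hidx l)) n m :
  proj1_sig (comp_of w n) m = proj1_sig w (n, m).
Proof.
rewrite /comp_of mkl2_val //.
have h := proj2_sig w; rewrite /sqsummable in h *.
apply: le_lt_trans h; rewrite /sqsum fubini; last by move=> p; rewrite lee_fin cn2_ge0.
set F := (fun n0 => \esum_(m0 in [set: nat]) (cn2 (proj1_sig w (n0, m0)))%:E).
have H : (F n <= \esum_(i in [set: idx l]) F i)%E.
  by apply: esum_ge_single => i; apply: esum_ge0 => j _; rewrite lee_fin cn2_ge0.
exact: H.
Qed.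

Lemma n2_fub (l : len) (w : l2 (Hidx l)) :
  (n2 w)%:E = \esum_(n in [set: idx l]) (n2 (comp_of w n))%:E.
Proof.
rewrite -l2E /sqsum fubini; last by move=> p; rewrite lee_fin cn2_ge0.
apply: eq_esum => n _; rewrite -l2E; apply: eq_esum => m _; by rewrite comp_ofE.
Qed.

Lemma n2_comp_le (l : len) (w : l2 (Hidx l)) n : n2 (comp_of w n) <= n2 w.
Proof.
rewrite -lee_fin n2_fub.
have := (@esum_ge_single _ (fun n0 => (n2 (comp_of w n0))%:E) n).
apply; by move=> i; rewrite lee_fin n2_ge0.
Qed.

Lemma comp_ext (l : len) (v1 v2 : l2 (Hidx l)) :
  (forall n, comp_of v1 n = comp_of v2 n) -> v1 = v2.
Proof. by move=> h; apply: l2_extP => -[n m]; rewrite -!comp_ofE h. Qed.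

Lemma comp_lin (l : len) a (u v : l2 (Hidx l)) n :
  comp_of (vlin a u v) n = vlin a (comp_of u n) (comp_of v n).
Proof. apply: l2_extP => m. rewrite (comp_ofE (vlin a u v)). rewrite vlinE. rewrite vlinE. rewrite (comp_ofE u). rewrite (comp_ofE v). reflexivity. Qed.

Lemma comp_l2zero (l : len) n : comp_of (l2zero (Hidx l)) n = l2zero nat.
Proof. apply: l2_extP => m. rewrite (comp_ofE (l2zero (Hidx l))). reflexivity. Qed.

Definition inj (l : len) (n : idx l) (v : l2 nat) : l2 (Hidx l) :=
  mkl2 (fun p : Hidx l => if p.1 == n then proj1_sig v p.2 else 0).

Lemma inj_sq (l : len) (n : idx l) (v : l2 nat) :
  sqsum (fun p : Hidx l => if p.1 == n then proj1_sig v p.2 else 0) = (n2 v)%:E.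
Proof.
rewrite /sqsum fubini; last by move=> p; rewrite lee_fin cn2_ge0.
rewrite (@esum_single _ _ n) /=.
- by rewrite eqxx -(l2E v).
- by move=> i; apply: esum_ge0 => j _; rewrite lee_fin cn2_ge0.
- by move=> i /negPf ->; apply: esum1 => j _; rewrite cn2_0.
Qed.

Lemma injE (l : len) (n : idx l) (v : l2 nat) p :
  proj1_sig (inj n v) p = if p.1 == n then proj1_sig v p.2 else 0.
Proof. rewrite /inj mkl2_val //. by rewrite /sqsummable inj_sq ltry. Qed.

Lemma comp_inj (l : len) (n : idx l) v n' :
  comp_of (inj n v) n' = if n' == n then v else l2zero nat.
Proof.
apply: l2_extP => m; rewrite (comp_ofE (inj n v)) (injE n v) /=.
by case: (n' == n).
Qed.

Lemma n2_inj (l : len) (n : idx l) v : n2 (inj n v) = n2 v.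
Proof.
rewrite {1}/n2 /ss.
have -> : proj1_sig (inj n v) = (fun p : Hidx l => if p.1 == n then proj1_sig v p.2 else 0).
  by apply: funext => p; rewrite (injE n v).
by rewrite inj_sq.
Qed.

Lemma bop_comp_of (l : len) (n : idx l) : bop (fun w : l2 (Hidx l) => comp_of w n).
Proof.
split.
  move=> a u v w hw j. rewrite (comp_ofE w) (comp_ofE u) (comp_ofE v). exact: hw.
apply: (@BND_bounded _ _ _ 1) => // w; rewrite mul1r; exact: n2_comp_le.
Qed.

Lemma bop_inj (l : len) (n : idx l) : bop (inj n).
Proof.
split.
  move=> a u v w hw j. rewrite (injE n w) (injE n u) (injE n v).
  case: (j.1 == n); [exact: hw|by rewrite mulr0 addr0].
by apply: (@BND_bounded _ _ _ 1) => // w; rewrite mul1r n2_inj.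
Qed.

Definition dsfun (l : len) (x : nat -> BH) (w : l2 (Hidx l)) : Hidx l -> CC :=
  fun p => proj1_sig (x (proj1_sig p.1) (comp_of w p.1)) p.2.

Lemma dsum_comp (l : len) (x : nat -> BH) (w : l2 (Hidx l)) C n :
  0 <= C -> (forall m, inL l m -> BND (x m) C) ->
  comp_of (dsum l x w) n = x (proj1_sig n) (comp_of w n).
Proof.
move=> C0 hx.
have hs : sqsummable (dsfun x w).
  rewrite /sqsummable /sqsum fubini; last by move=> p; rewrite lee_fin cn2_ge0.
  apply: (@le_lt_trans _ _ (\esum_(n0 in [set: idx l]) (C%:E * (n2 (comp_of w n0))%:E))%E).
    apply: le_esum => n0 _. rewrite -EFinM.
    have h := hx _ (proj2_sig n0) (comp_of w n0).
    apply: (@le_trans _ _ (sqsum (proj1_sig (x (proj1_sig n0) (comp_of w n0))))).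
      exact: lexx.
    by rewrite (l2E (x (proj1_sig n0) (comp_of w n0))) lee_fin.
  rewrite esumZ //; last by move=> i; rewrite lee_fin n2_ge0.
  by rewrite -n2_fub -EFinM ltry.
apply: l2_extP => m; rewrite (comp_ofE (dsum l x w)).
rewrite /dsum. rewrite (mkl2_val hs). reflexivity.
Qed.

Lemma dsum_inj (l : len) (x : nat -> BH) (n : idx l) v :
  (forall m, inL l m -> is_linear_op (x m)) ->
  dsum l x (inj n v) = inj n (x (proj1_sig n) v).
Proof.
move=> hx; rewrite /dsum.
have -> : (fun p : Hidx l => proj1_sig (x (proj1_sig p.1) (comp_of (inj n v) p.1)) p.2)
   = proj1_sig (inj n (x (proj1_sig n) v)).
  apply: funext => -[n' m]; rewrite (injE n) (comp_inj n v n') /=.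
  case: eqP => [-> //|_]; rewrite lin_op0 //; exact: hx _ (proj2_sig n').
by rewrite mkl2K.
Qed.

Opaque vlin inj comp_of mkl2.

Lemma vlin_0l (I : choiceType) c (v : l2 I) : vlin c (l2zero I) v = v.
Proof. by apply: l2_extP => i; rewrite vlinE /= mulr0 add0r. Qed.
Lemma vlin_1r0 (I : choiceType) (v : l2 I) : vlin 1 v (l2zero I) = v.
Proof. by apply: l2_extP => i; rewrite vlinE /= mul1r addr0. Qed.

Lemma lin_of_vlin (I J : choiceType) (T : Op I J) :
  (forall a u v, T (vlin a u v) = vlin a (T u) (T v)) -> is_linear_op T.
Proof.
move=> h a u v w hw j; have -> : w = vlin a u v.
  by apply: l2_extP => i; rewrite vlinE hw.
by rewrite h vlinE.
Qed.

Definition i0 : idx (Some 2%N) := exist _ 0%N isT.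
Definition i1 : idx (Some 2%N) := exist _ 1%N isT.

Lemma idx2 (n : idx (Some 2%N)) : n = i0 \/ n = i1.
Proof.
case: n => k hk; case: k hk => [|[|k]] hk.
- by left; congr exist; exact: Prop_irrelevance.
- by right; congr exist; exact: Prop_irrelevance.
- by [].
Qed.

Lemma i1i0 : (i1 == i0) = false.
Proof. by []. Qed.
Lemma i0i1 : (i0 == i1) = false.
Proof. by []. Qed.

Definition Sop (c : CC) (L : BH) (w : l2 (Hidx (Some 2%N))) : l2 (Hidx (Some 2%N)) :=
  vlin c (inj i0 (L (comp_of w i1))) w.

Lemma Sop_1 c L w : comp_of (Sop c L w) i1 = comp_of w i1.
Proof. by rewrite /Sop comp_lin comp_inj i1i0 vlin_0l. Qed.

Lemma Sop_0 c L w : comp_of (Sop c L w) i0 = vlin c (L (comp_of w i1)) (comp_of w i0).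
Proof. by rewrite /Sop comp_lin comp_inj eqxx. Qed.

Lemma SopK c L : cancel (Sop c L) (Sop (- c) L).
Proof.
move=> w; apply: comp_ext => n; case: (idx2 n) => ->; last by rewrite !Sop_1.
rewrite (Sop_0 (-c) L (Sop c L w)) (Sop_1 c L w) (Sop_0 c L w).
apply: l2_extP => m.
rewrite (vlinE (- c) (L (comp_of w i1)) (vlin c (L (comp_of w i1)) (comp_of w i0)) m).
rewrite (vlinE c (L (comp_of w i1)) (comp_of w i0) m).
by rewrite mulNr addrA addNr add0r.
Qed.

Lemma alg1 (R : comRingType) (a c x y z w : R) :
  c * (a * x + y) + (a * z + w) = a * (c * x + z) + (c * y + w).
Proof. ring. Qed.

Lemma bop_Sop c L : bop L -> bop (Sop c L).
Proof.
move=> hL; have [D D0 hD] := bop_BND hL; have hLl : is_linear_op L by case: hL.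
split.
  apply: lin_of_vlin => a u v; apply: comp_ext => n; case: (idx2 n) => ->.
    rewrite (Sop_0 c L (vlin a u v)) (comp_lin a (Sop c L u) (Sop c L v) i0).
    rewrite (Sop_0 c L u) (Sop_0 c L v) (comp_lin a u v i1) (comp_lin a u v i0).
    rewrite (lin_opE a (comp_of u i1) (comp_of v i1) hLl).
    apply: l2_extP => m.
    rewrite (vlinE c (vlin a (L (comp_of u i1)) (L (comp_of v i1))) (vlin a (comp_of u i0) (comp_of v i0)) m).
    rewrite (vlinE a (vlin c (L (comp_of u i1)) (comp_of u i0)) (vlin c (L (comp_of v i1)) (comp_of v i0)) m).
    rewrite (vlinE a (L (comp_of u i1)) (L (comp_of v i1)) m).
    rewrite (vlinE a (comp_of u i0) (comp_of v i0) m).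
    rewrite (vlinE c (L (comp_of u i1)) (comp_of u i0) m).
    rewrite (vlinE c (L (comp_of v i1)) (comp_of v i0) m).
    exact: alg1.
  rewrite (Sop_1 c L (vlin a u v)) (comp_lin a (Sop c L u) (Sop c L v) i1).
  by rewrite (Sop_1 c L u) (Sop_1 c L v) (comp_lin a u v i1).
apply: (@BND_bounded _ _ _ (2 * cn2 c * D + 2)).
  by rewrite addr_ge0 // mulr_ge0 // mulr_ge0 // cn2_ge0.
move=> w.
set z := inj i0 (L (comp_of w i1)).
have h := sqsum_lin c (proj1_sig z) (proj1_sig w).
rewrite (l2E z) (l2E w) (n2_inj i0 (L (comp_of w i1))) in h.
have e : proj1_sig (Sop c L w) =
   (fun i => (c * proj1_sig z i + proj1_sig w i)%R).
  by apply: funext => i; rewrite /Sop (vlinE c z w i).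
rewrite -!EFinM -EFinD in h.
have [_ h3] := sqsummable_leE h.
have -> : n2 (Sop c L w) = ss (fun i => (c * proj1_sig z i + proj1_sig w i)%R).
  by rewrite /n2 e.
apply: (le_trans h3); rewrite [X in _ <= X]mulrDl lerD2r.
rewrite -mulrA; apply: ler_wpM2l; first by rewrite mulr_ge0 ?cn2_ge0.
apply: (le_trans (hD _)); apply: ler_wpM2l => //; exact: n2_comp_le.
Qed.

Lemma binv_Sop c L : bop L -> binvertible (Sop c L) (Sop (- c) L).
Proof.
move=> hL; split; first exact: bop_Sop.
split; first exact: bop_Sop.
split; first exact: SopK.
by move=> w; have := SopK (- c) L w; rewrite opprK.
Qed.

Lemma ds2_comp (xs : nat -> BH) (w : l2 (Hidx (Some 2%N))) n :
  (forall m, inL (Some 2%N) m -> bop (xs m)) ->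
  comp_of (dsum (Some 2%N) xs w) n = xs (proj1_sig n) (comp_of w n).
Proof.
move=> hb; have [C0 C00 h0] := bop_BND (hb 0%N isT).
have [C1 C10 h1] := bop_BND (hb 1%N isT).
apply: (@dsum_comp _ _ _ (C0 + C1)); first exact: addr_ge0.
move=> m; case: m => [|[|m]] // _ v.
  apply: (le_trans (h0 v)); apply: ler_wpM2r; [exact: n2_ge0|by rewrite lerDl].
apply: (le_trans (h1 v)); apply: ler_wpM2r; [exact: n2_ge0|by rewrite lerDr].
Qed.

Lemma opdist_refl (I J : choiceType) (T : Op I J) : opdist T T = 0.
Proof.
rewrite /opdist.
have -> : [set vnorm (fun j => proj1_sig (T v) j - proj1_sig (T v) j)
      | v in [set v : l2 I | nrm v <= 1]] = [set 0].
  apply/seteqP; split => z /=.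
    move=> [v _ <-]; rewrite /vnorm.
    have -> : (fun j => proj1_sig (T v) j - proj1_sig (T v) j) = (fun _ => 0 : CC).
      by apply: funext => j; rewrite subrr.
    by rewrite sqsum0 /= sqrtr0.
  move=> ->; exists (l2zero I); first by rewrite /= nrm_n2 n2_l2zero sqrtr0.
  rewrite /vnorm.
  have -> : (fun j => proj1_sig (T (l2zero I)) j - proj1_sig (T (l2zero I)) j) = (fun _ => 0 : CC).
    by apply: funext => j; rewrite subrr.
  by rewrite sqsum0 /= sqrtr0.
exact: sup1.
Qed.

Lemma tdist_refl (d : nat) (x : BHt d) : tdist x x = 0.
Proof.
rewrite /tdist; elim/big_rec: _ => // i y _ ->; by rewrite opdist_refl maxxx.
Qed.

Lemma Omk_succ (d : nat) (Om : set (BHt d)) Omk k z :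
  nc_domain Om Omk -> Omk k z -> Omk k.+1 z.
Proof.
move=> [hb hsub hint _ _] hz; have [e e0 h] := hint k z hz.
apply: h; first by apply: hb; apply: (hsub k).
by rewrite tdist_refl.
Qed.

Lemma Omk_mono (d : nat) (Om : set (BHt d)) Omk k m z :
  nc_domain Om Omk -> Omk k z -> Omk (k + m)%N z.
Proof.
move=> hd hz; elim: m => [|m ih]; first by rewrite addn0.
by rewrite addnS; exact: Omk_succ hd ih.
Qed.

Lemma bop_unitary (I J : choiceType) (u : Op I J) : unitary u -> bop u.
Proof.
move=> [hl [hn _]]; split => //; exists 1 => v; by rewrite hn mul1r.
Qed.

Lemma binv_unitary (I J : choiceType) (u : Op I J) u' :
  unitary u -> cancel u u' -> cancel u' u -> binvertible u u'.
Proof.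
move=> hu uK u'K; have hb := bop_unitary hu; case: hu => [hl [hn _]].
split => //; split => //; split.
  apply: lin_of_vlin => a w1 w2; apply: (can_inj uK).
  by rewrite u'K lin_opE // !u'K.
by exists 1 => v; rewrite -{2}(u'K v) hn mul1r.
Qed.

Lemma intertwine (d r : nat) (Om : set (BHt d)) (Omk : nat -> set (BHt d))
    (f : BHt d -> BHt r) (y x : BHt d) (L : BH) :
  nc_domain Om Omk -> nc_function Om f -> Om y -> Om x -> bop L ->
  (forall i z, y i (L z) = L (x i z)) -> forall j z, f y j (L z) = L (f x j z).
Proof.
move=> hd hf Oy Ox hL hint j v.
have hd' := hd; case: hd' => [hbop hsub _ hex [_ _ hds]].
have [ky hy] := hex y Oy; have [kx hx] := hex x Ox.
have hy' := Omk_mono kx hd hy; have hx' := Omk_mono ky hd hx.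
rewrite addnC in hx'.
have [u [u' [hu uK u'K hz]]] := hds (ky + kx)%N (Some 2%N) (pair_seq y x) isT
  ltac:(by move=> n _; rewrite /pair_seq; case: (n == 0%N)).
have bu := binv_unitary hu uK u'K.
set S := Sop 1 L; set Si := Sop (- 1) L.
have bS : binvertible S Si by exact: binv_Sop.
have bs' := binv_comp bu bS.
set D := dsumt (Some 2%N) (pair_seq y x).
have bpair : forall (k : nat) (a b : BHt k), bopt a -> bopt b -> forall i m, inL (Some 2%N) m ->
    bop (pair_seq a b m i).
  by move=> k a b ha hb i m _; rewrite /pair_seq; case: (m == 0%N).
have comm : forall i w, D i (S w) = S (D i w).
  move=> i w; apply: comp_ext => n.
  have hb := bpair _ y x (hbop _ Oy) (hbop _ Ox) i.
  have hyl : is_linear_op (y i) by case: (hbop _ Oy i).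
  rewrite /D /dsumt /S.
  set xs := (fun n0 => pair_seq y x n0 i).
  set Dw := dsum (Some 2%N) xs w.
  have x0 : xs (proj1_sig i0) = y i by [].
  have x1 : xs (proj1_sig i1) = x i by [].
  case: (idx2 n) => ->.
    rewrite (@ds2_comp xs (Sop 1 L w) i0 hb) (@Sop_0 1 L w) (@Sop_0 1 L Dw).
    rewrite /Dw (@ds2_comp xs w i1 hb) (@ds2_comp xs w i0 hb) x0 x1.
    by rewrite (@lin_opE _ _ _ 1 (L (comp_of w i1)) (comp_of w i0) hyl) hint.
  rewrite (@ds2_comp xs (Sop 1 L w) i1 hb) (@Sop_1 1 L w) (@Sop_1 1 L Dw).
  by rewrite /Dw (@ds2_comp xs w i1 hb).
have eqc : conjt (u' \o Si) D (S \o u) = conjt u' D u.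
  apply: funext => i; apply: funext => w; rewrite /conjt /= comm.
  by rewrite /Si (SopK 1 L).
have Oc : Om (conjt u' D u) by apply: (hsub (ky + kx)%N).
have [_ hnc] := hf.
have e1 := hnc y x (S \o u) (u' \o Si) Oy Ox bs' ltac:(by rewrite -/D eqc).
have e2 := hnc y x u u' Oy Ox bu Oc.
rewrite -/D eqc e2 in e1.
set Df := dsumt (Some 2%N) (pair_seq (f y) (f x)) in e1.
set w := inj i1 v.
have e3 : Si (Df j (S w)) = Df j w.
  have := congr1 (fun F => F j (u' w)) e1; rewrite /conjt /= u'K => h.
  by apply: (can_inj u'K); rewrite -h.
have e4 : Df j (S w) = S (Df j w).
  by rewrite -e3 /S /Si; have := SopK (- 1) L (Df j (S w)); rewrite opprK.
have h := congr1 (fun z => comp_of z i0) e4; simpl in h.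
have [hfb _] := hf.
have hb := bpair _ (f y) (f x) (hfb _ Oy) (hfb _ Ox) j.
have hfyl : is_linear_op (f y j) by case: (hfb _ Oy j).
move: h; rewrite /Df /dsumt.
set xs := (fun n0 => pair_seq (f y) (f x) n0 j).
have x0 : xs (proj1_sig i0) = f y j by [].
have x1 : xs (proj1_sig i1) = f x j by [].
set Dw := dsum (Some 2%N) xs w.
rewrite (@ds2_comp xs (S w) i0 hb) /S (@Sop_0 1 L w) (@Sop_0 1 L Dw).
rewrite /Dw (@ds2_comp xs w i1 hb) (@ds2_comp xs w i0 hb) x0 x1.
rewrite /w (@comp_inj _ i1 v i1) (@comp_inj _ i1 v i0) eqxx i0i1.
rewrite (@lin_opE _ _ _ 1 (L v) (l2zero nat) hfyl) (lin_op0 hfyl) !vlin_1r0.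
by [].
Qed.

Lemma bop_nrm (I J : choiceType) (T : Op I J) :
  bop T -> exists2 M, 0 <= M & forall v, nrm (T v) <= M * nrm v.
Proof.
move=> hT; have [C C0 hC] := bop_BND hT; exists (Num.sqrt C) => // v.
rewrite !nrm_n2 -sqrtrM //; apply: ler_wsqrtr; exact: hC.
Qed.

Lemma nrm_comp_le (l : len) (w : l2 (Hidx l)) n : nrm (comp_of w n) <= nrm w.
Proof. rewrite !nrm_n2; apply: ler_wsqrtr; exact: n2_comp_le. Qed.

Lemma nrm_inj (l : len) (n : idx l) v : nrm (inj n v) = nrm v.
Proof. by rewrite !nrm_n2 n2_inj. Qed.

Lemma tnorm_op (k : nat) (z : BHt k) j w : bopt z -> nrm (z j w) <= tnorm z * nrm w.
Proof.
move=> hz; apply: (le_trans (opnorm_bound w (hz j))).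
apply: ler_wpM2r; [exact: nrm_ge0|exact: opnorm_le_tnorm].
Qed.

Lemma bound_part (d r : nat) (Om : set (BHt d)) (Omk : nat -> set (BHt d))
    (f : BHt d -> BHt r) (l : len) (x : nat -> BHt d) (s : Op nat (Hidx l)) (t : Op (Hidx l) nat) :
  nc_domain Om Omk -> nc_function Om f ->
  (forall n, inL l n -> Om (x n)) -> binvertible s t ->
  Om (conjt t (dsumt l x) s) ->
  exists M : RR, forall n, inL l n -> tnorm (f (x n)) <= M.
Proof.
move=> hd hf hx [bs [bt [st ts]]] Oy.
set y := conjt t (dsumt l x) s.
have hbop : forall z, Om z -> bopt z by case: hd.
have [Ms Ms0 hMs] := bop_nrm bs; have [Mt Mt0 hMt] := bop_nrm bt.
have [hfb _] := hf.
exists (Ms * tnorm (f y) * Mt) => n hn.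
set nn : idx l := exist _ n hn.
have hint : forall i z, y i (t (inj nn z)) = t (inj nn (x n i z)).
  move=> i z; rewrite /y /conjt /= ts /dsumt dsum_inj //.
  by move=> m hm; case: (hbop _ (hx m hm) i).
have bL : bop (t \o inj nn) by apply: bop_comp => //; exact: bop_inj.
have key := intertwine hd hf Oy (hx n hn) bL hint.
have M0 : 0 <= Ms * tnorm (f y) * Mt by rewrite !mulr_ge0 // tnorm_ge0.
apply: tnorm_le => // j; apply: opnorm_le => // v hv.
have e : f (x n) j v = comp_of (s (f y j (t (inj nn v)))) nn.
  by rewrite (key j v) ts comp_inj eqxx.
rewrite e; apply: (le_trans (nrm_comp_le _ _)); apply: (le_trans (hMs _)).
rewrite -!mulrA; apply: ler_wpM2l => //.
apply: (le_trans (tnorm_op j (t (inj nn v)) (hfb _ Oy))).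
apply: ler_wpM2l; first exact: tnorm_ge0.
apply: (le_trans (hMt _)); rewrite nrm_inj -[X in _ <= X]mulr1.
by apply: ler_wpM2l.
Qed.

Lemma eq_part (d r : nat) (Om : set (BHt d)) (Omk : nat -> set (BHt d))
    (f : BHt d -> BHt r) (l : len) (x : nat -> BHt d) (s : Op nat (Hidx l)) (t : Op (Hidx l) nat) :
  nc_domain Om Omk -> nc_function Om f ->
  (forall n, inL l n -> Om (x n)) -> unif_bounded l x -> binvertible s t ->
  Om (conjt t (dsumt l x) s) ->
  f (conjt t (dsumt l x) s) = conjt t (dsumt l (fun n => f (x n))) s.
Proof.
move=> hd hf hx [M hM] [bs [bt [st ts]]] Oy.
set y := conjt t (dsumt l x) s.
have hbop : forall z, Om z -> bopt z by case: hd.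
have hBND : forall i m, inL l m -> BND (x m i) (M ^+ 2).
  move=> i m hm v; rewrite -!nrm_sqr -exprMn; apply: sqr_le; first exact: nrm_ge0.
  apply: (le_trans (tnorm_op i v (hbop _ (hx m hm)))).
  apply: ler_wpM2r; [exact: nrm_ge0|exact: hM].
have key : forall (nn : idx l) j w,
    f (x (proj1_sig nn)) j (comp_of (s w) nn) = comp_of (s (f y j w)) nn.
  move=> nn j w.
  have bL : bop ((fun w0 => comp_of w0 nn) \o s) by apply: bop_comp => //; exact: bop_comp_of.
  have hint : forall i z, x (proj1_sig nn) i (comp_of (s z) nn) = comp_of (s (y i z)) nn.
    move=> i z; rewrite /y /conjt /= ts /dsumt.
    by rewrite (@dsum_comp l (fun m => x m i) (s z) (M ^+ 2) nn (sqr_ge0 _) (hBND i)).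
  exact: (intertwine hd hf (hx _ (proj2_sig nn)) Oy bL hint).
apply: funext => j; apply: funext => w; rewrite /conjt /= /dsumt /dsum.
have -> : (fun p : Hidx l => proj1_sig (f (x (proj1_sig p.1)) j (comp_of (s w) p.1)) p.2)
    = proj1_sig (s (f y j w)).
  apply: funext => -[nn m] /=; rewrite key.
  exact: (comp_ofE (s (f y j w)) nn m).
by rewrite mkl2K st.
Qed.

Theorem mainTheorem8 (d r : nat) (Om : set (BHt d)) (Omk : nat -> set (BHt d))
    (f : BHt d -> BHt r) :
  nc_domain Om Omk -> nc_function Om f ->
  (forall k, norm_bounded (f @` Omk k)) /\
  (forall (l : len) (x : nat -> BHt d) (s : Op nat (Hidx l)) (t : Op (Hidx l) nat),
     valid_len l ->
     (forall n, inL l n -> Om (x n)) ->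
     unif_bounded l x ->
     binvertible s t ->
     Om (conjt t (dsumt l x) s) ->
     (exists M : RR, forall n, inL l n -> tnorm (f (x n)) <= M) /\
     f (conjt t (dsumt l x) s) = conjt t (dsumt l (fun n => f (x n))) s).
Proof.
move=> hd hf; split; last first.
  move=> l x s t _ hx hub hst Oy; split.
    exact: (bound_part hd hf hx hst Oy).
  exact: (eq_part hd hf hx hub hst Oy).
move=> k; apply: contrapT => hnb.
have hch : forall n : nat, exists z, Omk k z /\ (n%:R < tnorm (f z)).
  move=> n; apply: contrapT => hne; apply: hnb; exists n%:R => w [z hz <-].
  rewrite leNgt; apply/negP => hlt; apply: hne; by exists z.
have [xs hxs] := choice hch.
have hd' := hd; case: hd' => [_ hsub _ _ [_ _ hds]].
have [u [u' [hu uK u'K hz]]] := hds k None xs I (fun n _ => proj1 (hxs n)).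
have bu := binv_unitary hu uK u'K.
have [M hM] := bound_part hd hf (fun n _ => hsub k _ (proj1 (hxs n))) bu (hsub k _ hz).
have hM0 : 0 <= `|M| by [].
have := archi_boundP hM0; set n := Num.bound `|M| => hn.
have := hM n isT; have := proj2 (hxs n) => h1 h2.
have : (n%:R < n%:R :> RR).
  apply: (lt_le_trans h1); apply: (le_trans h2); apply: ltW; apply: le_lt_trans hn.
  exact: ler_norm.
by rewrite ltxx.
Qed.
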